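(* Let $(X,X')$ and $(Y,Y')$ be two Banach couples and let $A\colon X\to Y$ be a bounded linear operator. If there exists an adversarial sequence for $A$ relative to $X'$ and $Y'$, then there exists an adversarial perturbation for $A$ relative to $X'$ and $Y'$.
   Context: A Banach couple is a pair of Banach spaces each of which is continuously embedded in a common Hausdorff topological vector space; set operations such as $X\cap X'$ are taken inside this ambient space via the embeddings. For $z$ in the ambient space of $(Y,Y')$, set $\|z\|_{Y'}=\infty$ if $z\notin Y'$. Given Banach couples $(X,X')$, $(Y,Y')$ and a bounded linear $A\colon X\to Y$: (i) an element $r\in X\cap X'$ is an adversarial perturbation for $A$ (relative to $X'$ and $Y'$) if $Ar\notin Y'$, i.e. $\|Ar\|_{Y'}=\infty$; (ii) a sequence $(r_n)_{n\in\mathbb{N}}$ in $X\cap X'$ is an adversarial sequence for $A$ (relative to $X'$ and $Y'$) if $(r_n)$ is bounded in both $X$ and $X'$ while $(Ar_n)$ is unbounded in $Y'$ (i.e. $\sup_n \|Ar_n\|_{Y'}=\infty$). *)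

(* Defs.v *)
From HB Require Import structures.
From mathcomp Require Import all_boot all_order all_algebra.
From mathcomp Require Import all_classical all_reals all_analysis.
Set Implicit Arguments. Unset Strict Implicit. Unset Printing Implicit Defensive.
Import Order.TTheory GRing.Theory Num.Theory.
Import numFieldNormedType.Exports.
Local Open Scope classical_set_scope.
Local Open Scope ring_scope.

Definition cont_embedding (R : realType) (Z : topologicalLmodType R)
  (X : completeNormedModType R) (i : {linear X -> Z}) : Prop :=
  injective i /\ continuous i.

(* ||z||_{X'} for z in the ambient space: the norm of the (unique, by
   injectivity) preimage of z, and +oo if z is not in X' (inf of empty = +oo). *)
Definition norm_in (R : realType) (Z : topologicalLmodType R)
  (X' : completeNormedModType R) (i : {linear X' -> Z}) (z : Z) : \bar R :=
  ereal_inf [set (`|x'|)%:E | x' in [set x' | i x' = z]].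

(* Elements r of X ∩ X' are represented by their X-preimage x (iX x = r). *)
Definition in_inter (R : realType) (Z : topologicalLmodType R)
  (X X' : completeNormedModType R) (iX : {linear X -> Z}) (iX' : {linear X' -> Z})
  (x : X) : Prop := exists x' : X', iX' x' = iX x.

Definition adversarial_perturbation (R : realType) (Z W : topologicalLmodType R)
  (X X' Y Y' : completeNormedModType R)
  (iX : {linear X -> Z}) (iX' : {linear X' -> Z})
  (jY : {linear Y -> W}) (jY' : {linear Y' -> W}) (A : {linear X -> Y}) (r : X) : Prop :=
  in_inter iX iX' r /\ norm_in jY' (jY (A r)) = +oo%E.

Definition adversarial_sequence (R : realType) (Z W : topologicalLmodType R)
  (X X' Y Y' : completeNormedModType R)
  (iX : {linear X -> Z}) (iX' : {linear X' -> Z})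
  (jY : {linear Y -> W}) (jY' : {linear Y' -> W}) (A : {linear X -> Y})
  (r : nat -> X) : Prop :=
  (forall n, in_inter iX iX' (r n)) /\
  (exists M : R, forall n, `|r n| <= M) /\
  (exists M : R, forall n, (norm_in iX' (iX (r n)) <= M%:E)%E) /\
  ereal_sup (range (fun n => norm_in jY' (jY (A (r n))))) = +oo%E.

(* Main.v *)
Require Import Defs.
From HB Require Import structures.
From mathcomp Require Import all_boot all_order all_algebra.
From mathcomp Require Import all_classical all_reals all_analysis.
Import Order.TTheory GRing.Theory Num.Theory.
Import numFieldNormedType.Exports.
Local Open Scope classical_set_scope.
Local Open Scope ring_scope.

Section CG.
Variables (R : realType) (V Y : completeNormedModType R) (T : V -> Y).
Hypothesis TD : forall x y, T (x + y) = T x + T y.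
Hypothesis TZ : forall (a : R) x, T (a *: x) = a *: T x.

Lemma T0 : T 0 = 0.
Proof. by rewrite -(scale0r 0) TZ scale0r. Qed.
Lemma TN x : T (- x) = - T x.
Proof. by rewrite -scaleN1r TZ scaleN1r. Qed.
Lemma TB x y : T (x - y) = T x - T y.
Proof. by rewrite TD TN. Qed.

Lemma closure_near (A : set V) x : closure A x ->
  forall e, 0 < e -> exists a, A a /\ `|x - a| < e.
Proof.
move=> cx e e0.
have /cx [a [Aa ba]] : nbhs x (ball x e) by apply: nbhsx_ballx.
by exists a; split => //; move: ba; rewrite -ball_normE.
Qed.

Lemma step1 : exists n : nat, exists x0 : V, exists r : R, 0 < r /\
  forall z, `|z - x0| < r -> closure [set x | `|T x| <= n%:R] z.
Proof.
set O := fun n : nat => ~` closure [set x | `|T x| <= n%:R].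
have O_open n : open (O n) by apply: closed_openC; exact: closed_closure.
have O_infempty : \bigcap_i O i = set0.
  rewrite -subset0 => x /= Hx.
  have := Hx (Num.truncn `|T x|).+1 Logic.I; apply.
  apply: subset_closure => /=.
  by apply: ltW; apply: truncnS_gt.
have ContraBaire : exists i, not (dense (O i)).
  apply/not_existsP => allD.
  have Hd : forall i, open (O i) /\ dense (O i).
    by move=> i; split => //; have := allD i => /contrapT.
  have := Baire Hd; rewrite O_infempty => dO.
  have [x [_ []]] : (@setT V) `&` set0 !=set0.
    by apply: dO; [exists 0 | exact: openT].
case: ContraBaire => i /denseNE [ O0 [ [ x /open_nbhs_nbhs /nbhs_ballP [r r0 bxr]] HO]].
exists i, x, r; split => // z zx.
have Oz : O0 z by apply: bxr; rewrite -ball_normE /ball_ /= distrC.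
apply: contrapT => nc.
have : (O0 `&` O i) z by split.
by rewrite HO.
Qed.

Lemma step2 (n : nat) (x0 : V) (r : R) : 0 < r ->
  (forall z, `|z - x0| < r -> closure [set x | `|T x| <= n%:R] z) ->
  forall z, `|z| < r -> forall e, 0 < e ->
  exists a, `|T a| <= 2 * n%:R /\ `|z - a| < e.
Proof.
move=> r0 Hc z zr e e0.
have e20 : 0 < e / 2 by rewrite divr_gt0.
have [a [/= Ta za]] := closure_near _ _ (Hc (x0 + z) ltac:(by rewrite [x0 + z]addrC addrK)) _ e20.
have [b [/= Tb zb]] := closure_near _ _ (Hc x0 ltac:(by rewrite subrr normr0)) _ e20.
exists (a - b); split.
  by rewrite TB (le_trans (ler_normB _ _))// mulr2n mulrDl mul1r lerD.
have -> : z - (a - b) = (x0 + z - a) - (x0 - b).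
  by rewrite [x0 + z]addrC [z + x0 - a]addrAC addrKA opprK opprB addrAC -addrA.
by rewrite (le_lt_trans (ler_normB _ _))// [e]splitr ltrD.
Qed.

Lemma step2s (K r : R) : 0 < r ->
  (forall z, `|z| < r -> forall e, 0 < e -> exists a, `|T a| <= K /\ `|z - a| < e) ->
  forall t, 0 < t -> forall z, `|z| < t * r -> forall e, 0 < e ->
  exists a, `|T a| <= t * K /\ `|z - a| < e.
Proof.
move=> r0 H t t0 z zr e e0.
have [||a [Ta za]] := H (t^-1 *: z) _ (e / t).
- by rewrite normrZ gtr0_norm ?invr_gt0// ltr_pdivrMl.
- by rewrite divr_gt0.
exists (t *: a); split.
  by rewrite TZ normrZ gtr0_norm// ler_pM2l.
have -> : z - t *: a = t *: (t^-1 *: z - a).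
  by rewrite scalerBr scalerA divff ?gt_eqF// scale1r.
by rewrite normrZ gtr0_norm// -ltr_pdivlMl// mulrC.
Qed.

Hypothesis TG : forall (u : nat -> V) x y, u @ \oo --> x ->
  (fun n => T (u n)) @ \oo --> y -> T x = y.

Lemma step3 (K r : R) : 0 < r -> 0 <= K ->
  (forall z, `|z| < r -> forall e, 0 < e -> exists a, `|T a| <= K /\ `|z - a| < e) ->
  forall z, `|z| < r -> `|T z| <= K * 2.
Proof.
move=> r0 K0 H z zr.
have H' := step2s K r r0 H.
pose q : R := 2^-1.
have q0 k : 0 < q ^+ k by rewrite exprn_gt0 // invr_gt0.
have ch : forall p : nat * V, exists a, `|p.2| < q ^+ p.1 * r ->
    `|T a| <= q ^+ p.1 * K /\ `|p.2 - a| < q ^+ p.1.+1 * r.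
  move=> [k w] /=; case: (pselect (`|w| < q ^+ k * r)) => wr.
    have [a Ha] := H' (q ^+ k) (q0 k) w wr (q ^+ k.+1 * r) (mulr_gt0 (q0 _) r0).
    by exists a.
  by exists 0.
have [f Hf] := choice ch.
pose fix zs k := if k is k'.+1 then zs k' - f (k', zs k') else z.
have inv : forall k, `|zs k| < q ^+ k * r.
  elim => [|k IH] /=; first by rewrite expr0 mul1r.
  by have [_ ] := Hf (k, zs k) IH.
pose a k := f (k, zs k).
have Ta k : `|T (a k)| <= K * q ^+ k.
  by have [+ _] := Hf (k, zs k) (inv k); rewrite mulrC.
pose b k := T (a k).
have sb m : series b m = T (z - zs m).
  elim: m => [|m IH]; first by rewrite seriesEnat /= big_geq // subrr T0.
  by rewrite seriesSr IH /= opprB addrCA [f _ + _]addrC (TD (z - zs m)).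
have zs0 : zs @ \oo --> 0.
  apply/cvgr0Pnorm_lt => e e0.
  have Hq : `|q| < 1 by rewrite ger0_norm ?invr_ge0 // invf_lt1 // ltr1n.
  have Hn := cvgr0_norm_lt _ (cvg_geometric r Hq) _ e0.
  near=> n.
  rewrite (lt_trans (inv n)) // mulrC (le_lt_trans (ler_norm _)) //.
  near: n; exact: Hn.
have u_cvg : (fun m => z - zs m) @ \oo --> z.
  by rewrite -[X in _ --> X]subr0; apply: cvgB => //; exact: cvg_cst.
have nb : cvgn [normed series b].
  change (cvgn (series (fun n => `|b n|))).
  apply: (@series_le_cvg _ _ (geometric K q)) => //.
  - by move=> n; rewrite /geometric /= mulr_ge0 // ltW.
  - by apply: is_cvg_geometric_series; rewrite ger0_norm ?invr_ge0 // invf_lt1 // ltr1n.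
have cb := normed_cvg nb.
have Tz : T z = limn (series b).
  apply: (TG _ _ _ u_cvg).
  have -> : (fun n => T (z - zs n)) = series b by apply/funext => n; rewrite sb.
  exact: cb.
rewrite Tz (le_trans (lim_series_norm nb)) //.
have -> : K * 2 = limn (series (geometric K q)).
  apply/esym/cvg_lim => //.
  have -> : K * 2 = K * (1 - q)^-1.
    congr (_ * _); suff -> : 1 - q = q by rewrite invrK.
    by rewrite {1}(splitr 1) div1r addrK.
  by apply: cvg_geometric_series; rewrite ger0_norm ?invr_ge0 // invf_lt1 // ltr1n.
apply: ler_lim => //.
  by apply: is_cvg_geometric_series; rewrite ger0_norm ?invr_ge0 // invf_lt1 // ltr1n.
near=> n; change (\sum_(0 <= k < n) `|b k| <= \sum_(0 <= k < n) geometric K q k).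
by apply: ler_sum => k _; exact: Ta.
Unshelve. all: by end_near.
Qed.

Lemma closed_graph_bounded (M : R) : exists C, forall z, `|z| <= M -> `|T z| <= C.
Proof.
have [n [x0 [r [r0 Hc]]]] := step1.
have H2 := step2 n x0 r r0 Hc.
have K0 : 0 <= 2 * n%:R :> R by rewrite mulr_ge0.
have H3 := step3 (2 * n%:R) r r0 K0 H2.
pose t := r / (`|M| + 1).
have t0 : 0 < t by rewrite divr_gt0 // ltr_wpDl.
exists (t^-1 * (2 * n%:R * 2)) => z zM.
have -> : z = t^-1 *: (t *: z) by rewrite scalerA mulVf ?gt_eqF // scale1r.
rewrite TZ normrZ gtr0_norm ?invr_gt0 // ler_pM2l ?invr_gt0 //.
apply: H3; rewrite normrZ gtr0_norm // (@le_lt_trans _ _ (t * `|M|)) //.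
  by rewrite ler_pM2l // (le_trans zM) // ler_norm.
by rewrite /t mulrAC ltr_pdivrMr ?ltr_wpDl // ltr_pM2l // ltrDl.
Qed.
End CG.

Section G.
Variables (R : realType) (Z W : topologicalLmodType R)
  (hZ : hausdorff_space Z) (hW : hausdorff_space W)
  (X X' Y Y' : completeNormedModType R)
  (iX : {linear X -> Z}) (iX' : {linear X' -> Z})
  (jY : {linear Y -> W}) (jY' : {linear Y' -> W}).

Definition Sp : {pred X * X'} := fun x => iX x.1 == iX' x.2.

Lemma Sp_closed : GRing.submod_closed Sp.
Proof.
split; first by rewrite unfold_in /= !linear0.
move=> a u v; rewrite !unfold_in /= => /eqP Hu /eqP Hv.
by rewrite !linearD !linearZ /= Hu Hv.
Qed.

HB.instance Definition _ := GRing.isSubmodClosed.Build R (X * X')%type Sp Sp_closed.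

Definition G := {x : X * X' | x \in Sp}.
HB.instance Definition _ := [isSub of G for @sval _ _].
HB.instance Definition _ := [Choice of G by <:].
HB.instance Definition _ := [SubChoice_isSubLmodule of G by <:].


Definition normG (x : G) : R := `|(val x).1| + `|(val x).2|.

Lemma normG_D x y : normG (x + y) <= normG x + normG y.
Proof.
rewrite /normG raddfD /=.
rewrite addrACA lerD // ler_normD //.
Qed.

Lemma normG_Z (l : R) x : normG (l *: x) = `|l| * normG x.
Proof. by rewrite /normG linearZ /= !normrZ mulrDr. Qed.

Lemma normG_eq0 x : normG x = 0 -> x = 0.
Proof.
rewrite /normG => /eqP; rewrite paddr_eq0 // !normr_eq0 => /andP[/eqP h1 /eqP h2].
apply: val_inj; rewrite raddf0; case: (val x) h1 h2 => a b /= -> -> //.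
Qed.

HB.instance Definition _ := Lmodule_isNormed.Build R G normG_D normG_Z normG_eq0.

Lemma normGE (x : G) : `|x| = `|(val x).1| + `|(val x).2|.
Proof. by []. Qed.


Hypothesis hiX : continuous iX.
Hypothesis hiX' : continuous iX'.
Hypothesis hiX'e : cont_embedding iX'.

Lemma G_complete (F : set_system G) : ProperFilter F -> cauchy F -> cvg F.
Proof.
move=> PF /cauchyP Fc.
pose f1 := fun g : G => (val g).1.
pose f2 := fun g : G => (val g).2.
have c1 : cvg (f1 @ F).
  apply: cauchy_cvg; apply/cauchyP => e e0.
  have [x Fx] := Fc e e0; exists (f1 x).
  suff : F [set g | ball (f1 x) e (f1 g)] by [].
  apply: (filterS _ Fx) => g; rewrite -!ball_normE /= normGE /f1 raddfB /=.
  by apply: le_lt_trans; rewrite lerDl.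
have c2 : cvg (f2 @ F).
  apply: cauchy_cvg; apply/cauchyP => e e0.
  have [x Fx] := Fc e e0; exists (f2 x).
  suff : F [set g | ball (f2 x) e (f2 g)] by [].
  apply: (filterS _ Fx) => g; rewrite -!ball_normE /= normGE /f2 raddfB /=.
  by apply: le_lt_trans; rewrite lerDr.
set l1 := lim (f1 @ F) in c1; set l2 := lim (f2 @ F) in c2.
have h1 := @continuous_cvg _ _ _ F _ f1 iX l1 (hiX l1) c1.
have h2 := @continuous_cvg _ _ _ F _ f2 iX' l2 (hiX' l2) c2.
have e12 : (iX \o f1) = (iX' \o f2).
  by apply/funext => g; rewrite /f1 /f2 /=; apply/eqP; case: g.
rewrite e12 in h1.
have El : iX l1 = iX' l2 by exact: (@cvg_unique _ hZ _ _ _ _ (h1 PF) (h2 PF)).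
have lS : (l1, l2) \in Sp by rewrite unfold_in /= El.
pose l : G := exist _ (l1, l2) lS.
apply: (cvgP l).
suff : (fun g => g) @ F --> l by [].
apply/cvgrPdist_lt => e e0.
have e20 : 0 < e / 2 by rewrite divr_gt0.
have := (cvgrPdist_lt _ _).1 c1 _ e20.
have := (cvgrPdist_lt _ _).1 c2 _ e20.
move=> H2 H1; near=> g.
rewrite normGE raddfB /= [e]splitr ltrD //.
  by near: g; exact: H1.
by near: g; exact: H2.
Unshelve. all: by end_near.
Qed.

HB.instance Definition _ := Uniform_isComplete.Build G G_complete.

Hypothesis hjY : cont_embedding jY.
Hypothesis hjY' : cont_embedding jY'.
Variable (A : {linear X -> Y}).
Hypothesis hA : exists C : R, forall x : X, `|A x| <= C * `|x|.

Lemma norm_in_eq (V : completeNormedModType R) (U : topologicalLmodType R)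
  (i : {linear V -> U}) : injective i ->
  forall v z, i v = z -> norm_in i z = (`|v|)%:E.
Proof.
move=> inj v z ivz; rewrite /norm_in.
have -> : [set (`|x'|)%:E | x' in [set x' | i x' = z]] = [set (`|v|)%:E].
  apply/seteqP; split => y /=.
    by case=> x' /= ix <-; rewrite (inj x' v) // ix ivz.
  by move=> ->; exists v.
by rewrite ereal_inf1.
Qed.

Lemma norm_in_ex (V : completeNormedModType R) (U : topologicalLmodType R)
  (i : {linear V -> U}) z : norm_in i z <> +oo%E -> exists v, i v = z.
Proof.
move=> h; apply: contrapT => nex; apply: h; rewrite /norm_in.
have -> : [set (`|x'|)%:E | x' in [set x' | i x' = z]] = set0.
  apply/seteqP; split => y //= [x' /= ix _]; apply: nex; by exists x'.
exact: ereal_inf0.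
Qed.

Lemma main_lemma :
  (exists r : nat -> X, adversarial_sequence iX iX' jY jY' A r) ->
  exists r : X, adversarial_perturbation iX iX' jY jY' A r.
Proof.
move=> [r [rin [[M1 HM1] [[M2 HM2] Hsup]]]].
apply: contrapT => Hno.
have HT : forall g : G, exists y' : Y', jY' y' = jY (A (val g).1).
  move=> g; apply: norm_in_ex => h; apply: Hno; exists (val g).1; split => //.
  exists (val g).2; have := valP g; rewrite unfold_in /= => /eqP -> //.
have [T HTe] := choice HT.
have jinj := hjY'.1.
have TD : forall x y, T (x + y) = T x + T y.
  by move=> x y; apply: jinj; rewrite linearD !HTe raddfD /= !linearD.
have TZ : forall (a : R) x, T (a *: x) = a *: T x.
  by move=> a x; apply: jinj; rewrite linearZ !HTe linearZ /= !linearZ.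
have TG : forall (u : nat -> G) x y, u @ \oo --> x ->
    (fun n => T (u n)) @ \oo --> y -> T x = y.
  move=> u x y ux Tuy; apply: jinj; rewrite HTe.
  have c1 : (fun n => (val (u n)).1) @ \oo --> (val x).1.
    apply/cvgrPdist_lt => e e0.
    have H := (cvgrPdist_lt _ _).1 ux _ e0.
    near=> n; have : `|x - u n| < e by near: n; exact: H.
    rewrite normGE raddfB /=.
    by apply: le_lt_trans; rewrite lerDl.
  have cA : (fun n => A (val (u n)).1) @ \oo --> A (val x).1.
    have [C HC] := hA.
    apply/cvgrPdist_lt => e e0.
    have C0 : 0 < `|C| + 1 by rewrite ltr_wpDl.
    have H := (cvgrPdist_lt _ _).1 c1 (e / (`|C| + 1)) (divr_gt0 e0 C0).
    near=> n; have Hn : `|(val x).1 - (val (u n)).1| < e / (`|C| + 1) by near: n; exact: H.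
    rewrite -linearB (le_lt_trans (HC _)) //.
    rewrite (@le_lt_trans _ _ ((`|C| + 1) * `|(val x).1 - (val (u n)).1|)) //.
      by rewrite ler_wpM2r // (le_trans (ler_norm _)) // lerDl.
    by rewrite mulrC -ltr_pdivlMr.
  have cj := @continuous_cvg _ _ _ _ _ _ jY _ (hjY.2 (A (val x).1)) cA.
  have cj' := @continuous_cvg _ _ _ _ _ _ jY' _ (hjY'.2 y) Tuy.
  have ee : (jY' \o (fun n => T (u n))) = (jY \o (fun n => A (val (u n)).1)).
    by apply/funext => n /=; rewrite HTe.
  rewrite ee in cj'.
  exact: (@cvg_unique _ hW _ _ _ _ (cj eventually_filter) (cj' eventually_filter)).
have [C HC] := @closed_graph_bounded R G Y' T TD TZ TG (M1 + M2).
have rin' : forall n, exists x', iX' x' = iX (r n) := rin.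
have [xp Hxp] := choice rin'.
have gP : forall n, (r n, xp n) \in Sp.
  by move=> n; rewrite unfold_in /= Hxp.
pose g n : G := exist _ (r n, xp n) (gP n).
have gM n : `|g n| <= M1 + M2.
  rewrite normGE /= lerD //.
  by have := HM2 n; rewrite (@norm_in_eq _ _ _ hiX'e.1 _ _ (Hxp n)) lee_fin.
have : (ereal_sup (range (fun n => norm_in jY' (jY (A (r n))))) <= C%:E)%E.
  apply: ge_ereal_sup => _ [n _ <-].
  rewrite (@norm_in_eq _ _ _ hjY'.1 _ _ (HTe (g n))) lee_fin.
  exact: HC.
by rewrite Hsup.
Unshelve. all: by end_near.
Qed.
End G.

Theorem theorem2p3 (R : realType) (Z W : topologicalLmodType R)
  (hZ : hausdorff_space Z) (hW : hausdorff_space W)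
  (X X' Y Y' : completeNormedModType R)
  (iX : {linear X -> Z}) (iX' : {linear X' -> Z})
  (jY : {linear Y -> W}) (jY' : {linear Y' -> W})
  (hiX : cont_embedding iX) (hiX' : cont_embedding iX')
  (hjY : cont_embedding jY) (hjY' : cont_embedding jY')
  (A : {linear X -> Y}) (hA : exists C : R, forall x : X, `|A x| <= C * `|x|) :
  (exists r : nat -> X, adversarial_sequence iX iX' jY jY' A r) ->
  exists r : X, adversarial_perturbation iX iX' jY jY' A r.
Proof.
exact: (@main_lemma R Z W hZ hW X X' Y Y' iX iX' jY jY' hiX.2 hiX'.2 hiX' hjY hjY' A hA).
Qed.
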